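(* For any history $\mathcal{F}_{t-1}$, conditioned on the event $E^f(t)$, \[ \mathbb{P}\big(\mathbf{x}_t\in\mathcal{X}\setminus S_t\mid\mathcal{F}_{t-1}\big)\ge p-1/t^2,\qquad p=\frac{1}{4e\sqrt{\pi}}. \]
   Context: $\mathcal{X}$ is a finite subset of the unit ball of $\mathbb{R}^d$; $f\sim\mathcal{GP}(0,k)$ with $k$ the NTK; observations $y=f(\mathbf{x})+\zeta$, $\zeta\sim\mathcal{N}(0,\sigma^2)$. Queries indexed sequentially; $\mathrm{fb}[t]$ is the largest index whose observation is available when $\mathbf{x}_t$ is chosen ($t-\mathrm{fb}[t]\le B$). $\mu_{\mathrm{fb}[t]},\sigma_{\mathrm{fb}[t]}$: GP posterior mean/std given observations $1,\dots,\mathrm{fb}[t]$; $\mathcal{F}_{t-1}$ the collected inputs/outputs plus pending inputs $\mathbf{x}_{\mathrm{fb}[t]+1},\dots,\mathbf{x}_{t-1}$. $\beta_t=2\log(\pi^2t^2|\mathcal{X}|/(3\delta))$, $c_t=\beta_t(1+\sqrt{2\log(|\mathcal{X}|t^2)})$. Given $\mathcal{F}_{t-1}$, $f_t\sim\mathcal{GP}(\mu_{\mathrm{fb}[t]},\beta_t^2\sigma^2_{\mathrm{fb}[t]})$ and $\mathbf{x}_t=\arg\max_{\mathbf{x}\in\mathcal{X}}f_t(\mathbf{x})$. $E^f(t)$: $|\mu_{\mathrm{fb}[t]}(\mathbf{x})-f(\mathbf{x})|\le\beta_t\sigma_{\mathrm{fb}[t]}(\mathbf{x})$ for all $\mathbf{x}$.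 With $\mathbf{x}^*$ a maximizer of $f$ and $\Delta(\mathbf{x})=f(\mathbf{x}^* )-f(\mathbf{x})$, the saturated set is $S_t=\{\mathbf{x}\in\mathcal{X}:\Delta(\mathbf{x})>c_t\sigma_{\mathrm{fb}[t]}(\mathbf{x})\}$. *)

(* Defs.v *)
From HB Require Import structures.
From mathcomp Require Import all_boot all_order all_algebra.
From mathcomp Require Import all_classical all_reals all_analysis.
Set Implicit Arguments. Unset Strict Implicit. Unset Printing Implicit Defensive.
Import Order.TTheory GRing.Theory Num.Theory.
Local Open Scope classical_set_scope.
Local Open Scope ring_scope.

Section GPdefs.
Variables (R : realType) (T : finType).

Definition psd_kernel (k : T -> T -> R) : Prop :=
  (forall x y, k x y = k y x) /\
  (forall w : T -> R, 0 <= \sum_x \sum_y w x * k x y * w y).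

Definition gram (k : T -> T -> R) (s2 : R) n (xs : 'I_n -> T) : 'M[R]_n :=
  \matrix_(i, j) k (xs i) (xs j) + s2%:M.
Definition kvec (k : T -> T -> R) n (xs : 'I_n -> T) (x : T) : 'rV[R]_n :=
  \row_i k x (xs i).

Definition post_mean k s2 n (xs : 'I_n -> T) (ys : 'I_n -> R) (x : T) : R :=
  (kvec k xs x *m invmx (gram k s2 xs) *m (\col_i ys i)) 0 0.
Definition post_cov k s2 n (xs : 'I_n -> T) (x y : T) : R :=
  k x y - (kvec k xs x *m invmx (gram k s2 xs) *m (kvec k xs y)^T) 0 0.
Definition post_sd k s2 n (xs : 'I_n -> T) (x : T) : R :=
  Num.sqrt (post_cov k s2 xs x x).

Definition beta_t (t : nat) (delta : R) : R :=
  2 * ln (pi ^+ 2 * (t%:R) ^+ 2 * #|T|%:R / (3 * delta)).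
Definition c_t (t : nat) (delta : R) : R :=
  beta_t t delta * (1 + Num.sqrt (2 * ln (#|T|%:R * (t%:R) ^+ 2))).

Definition p_const : R := (4 * expR 1 * Num.sqrt pi)^-1.
End GPdefs.

Definition gauss_law {R : realType} (m v : R) (A : set R) : \bar R :=
  if 0 < v then normal_prob m (Num.sqrt v) A else \d_m A.

(* F : Omega -> (T -> R) is a Gaussian random vector (= a GP on the finite
   set T) with mean m and covariance C: every coordinate is measurable and
   every linear combination is real Gaussian with the induced mean/variance. *)
Definition gaussian_vector {R : realType} {T : finType} {d : measure_display}
  {Omega : measurableType d} (P : probability Omega R) (F : Omega -> T -> R)
  (m : T -> R) (C : T -> T -> R) : Prop :=
  (forall x, measurable_fun setT (fun w => F w x)) /\
  (forall (a : T -> R) (A : set R), measurable A ->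
     P ((fun w => \sum_x a x * F w x) @^-1` A) =
     gauss_law (\sum_x a x * m x) (\sum_x \sum_y a x * C x y * a y) A).

(* Main.v *)
Require Import Defs.
From HB Require Import structures.
From mathcomp Require Import all_boot all_order all_algebra.
From mathcomp Require Import all_classical all_reals all_analysis.
From mathcomp Require Import measurable_realfun ring lra.
Import Order.TTheory GRing.Theory Num.Theory.
Local Open Scope classical_set_scope.
Local Open Scope ring_scope.

Lemma mpdf (R : realType) (m s : R) :
  measurable_fun [set: R] (EFin \o normal_pdf m s).
Proof. by apply/measurable_EFinP; exact: measurable_normal_pdf. Qed.

Lemma normal_tail (R : realType) (m s a : R) : 0 < s -> 0 <= a ->
  (normal_prob m s [set y | (m + a * s < y)%R] <= (expR (- (a ^+ 2 / 2)))%:E)%E.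
Proof.
move=> s0 a0; have sn0 : s != 0 by rewrite gt_eqF.
have mV : measurable [set y : R | m + a * s < y].
  rewrite (_ : [set y | _ < y] = `]m + a * s, +oo[%classic); last first.
    by apply/seteqP; split => y /=; rewrite in_itv /= andbT.
  exact: measurable_itv.
apply: (@le_trans _ _ ((expR (- (a ^+ 2 / 2)))%:E * normal_prob (m + a * s)%R s [set y | (m + a * s < y)%R])%E).
  rewrite /normal_prob -ge0_integralZl //; last by move=> y _; rewrite lee_fin normal_pdf_ge0.
  - apply: ge0_le_integral => //.
    + by move=> y _; rewrite lee_fin normal_pdf_ge0.
    + apply: measurable_funTS; apply/measurable_EFinP; exact: measurable_normal_pdf.
    + apply: measurable_funeM; apply: measurable_funTS; apply/measurable_EFinP; exact: measurable_normal_pdf.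
    + move=> y /= hy; rewrite -EFinM lee_fin !normal_pdfE //.
      rewrite mulrCA ler_wpM2l ?normal_peak_ge0 // /normal_fun -expRD ler_expR.
      set u := y - m.
      have -> : y - (m + a * s) = u - a * s by rewrite /u; ring.
      rewrite -subr_ge0.
      have -> : - (a ^+ 2 / 2) + - (u - a * s) ^+ 2 / (s ^+ 2 *+ 2) - - u ^+ 2 / (s ^+ 2 *+ 2)
          = a * (u - a * s) / s.
        by rewrite -mulr_natr; field.
      by rewrite divr_ge0 ?(ltW s0) // mulr_ge0 // subr_ge0 ltW // /u ltrBrDl.
  - apply: measurable_funTS; apply/measurable_EFinP; exact: measurable_normal_pdf.
rewrite -[X in (_ <= X)%E]mule1 lee_pmul2l ?lte_fin ?expR_gt0 //.
exact: probability_le1.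
Qed.

Lemma real_ineq (R : realType) (s : R) : 0 < s ->
  p_const R <= normal_peak s * expR (- (9 / 8)) * (s / 2).
Proof.
move=> s0.
have hq : 0 < Num.sqrt (pi : R) by rewrite sqrtr_gt0 pi_gt0.
have h2 : 0 < Num.sqrt (2 : R) by rewrite sqrtr_gt0.
have he : 0 < expR (1 : R) := expR_gt0 _.
set q := Num.sqrt (pi : R) in hq *; set r2 := Num.sqrt (2 : R) in h2 *.
set e := expR (1 : R) in he *.
set e8 := expR (- (1 / 8) : R).
have e8ge : 3 / 4 <= e8 ^+ 2.
  rewrite /e8 -expRM_natr; apply: le_trans (expR_ge1Dx _); lra.
have e80 : 0 <= e8 by exact: expR_ge0.
have r22 : r2 ^+ 2 = 2 by rewrite /r2 sqr_sqrtr.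
have key : r2 <= 2 * e8 by nra.
have E1 : expR (- (9 / 8)) = e^-1 * e8.
  by rewrite /e /e8 -expRN -expRD; congr expR; lra.
have Pk : normal_peak s = (s * q * r2)^-1.
  rewrite /normal_peak -mulr_natr; congr (_^-1).
  rewrite sqrtrM; last by rewrite mulr_ge0 ?sqr_ge0 ?pi_ge0.
  rewrite sqrtrM; last by rewrite sqr_ge0.
  by rewrite sqrtr_sqr ger0_norm ?(ltW s0).
rewrite Pk E1 /p_const -/e -/q.
have -> : (s * q * r2)^-1 * (e^-1 * e8) * (s / 2) = (2 * e8) / (4 * e * q * r2).
  by field; rewrite !gt_eqF.
have -> : (4 * e * q)^-1 = r2 / (4 * e * q * r2).
  by field; rewrite !gt_eqF.
by rewrite ler_pM2r // invr_gt0 !mulr_gt0.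
Qed.

Lemma normal_lower (R : realType) (m s : R) : 0 < s ->
  ((p_const R)%:E <= normal_prob m s [set y | (m + s <= y)%R])%E.
Proof.
move=> s0; have sn0 : s != 0 by rewrite gt_eqF.
have mV : measurable [set y : R | (m + s <= y)%R].
  rewrite (_ : [set y | _ <= y] = `[m + s, +oo[%classic); last first.
    by apply/seteqP; split => y /=; rewrite in_itv /= andbT.
  exact: measurable_itv.
apply: (@le_trans _ _ (normal_prob m s `[m + s, m + s * (3/2)]%classic)); last first.
  apply: le_measure; rewrite ?inE //.
  by move=> y /=; rewrite in_itv /= => /andP[].
rewrite /normal_prob.
apply: (@le_trans _ _ (\int[lebesgue_measure]_(x in `[(m + s)%R, (m + s * (3/2))%R]%classic)
   (cst (normal_peak s * expR (- (9 / 8)))%:E) x)%E).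
  rewrite integral_cst //; have LI := @lebesgue_measure_itv R `[(m + s)%R, (m + s * (3/2))%R]; rewrite [X in (_ * X)%E](_ : _ = ((s / 2)%R)%:E); last first.
    apply: eq_trans LI _; rewrite /= lte_fin ifT; last by rewrite ltrD2l; nra.
    by rewrite -EFinB; congr EFin; field.
  rewrite -EFinM lee_fin; exact: real_ineq.
apply: ge0_le_integral => //.
- by move=> y _; rewrite lee_fin mulr_ge0 ?normal_peak_ge0 ?expR_ge0.
- apply: measurable_funTS; apply/measurable_EFinP; exact: measurable_normal_pdf.
move=> y /=; rewrite in_itv /= => /andP[h1 h2].
rewrite lee_fin normal_pdfE // ler_wpM2l ?normal_peak_ge0 // /normal_fun ler_expR.
rewrite -mulr_natr mulNr lerN2 ler_pdivrMr ?mulr_gt0 ?exprn_gt0 //.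
have : 0 <= y - m <= s * (3 / 2) by apply/andP; split; lra.
move=> /andP[u0 u1].
have : (y - m) ^+ 2 <= (s * (3/2)) ^+ 2 by rewrite ler_sqr ?nnegrE //; lra.
move=> hh; apply: (le_trans hh); rewrite le_eqVlt; apply/orP; left; apply/eqP; field.
  by [].
by rewrite mulrn_wgt0 // exprn_gt0.
Qed.

Lemma sum_delta (T : finType) (R : ringType) (g : T -> R) x :
  \sum_y (y == x)%:R * g y = g x.
Proof.
rewrite (bigD1 x) //= eqxx mul1r big1 ?addr0 // => y /negbTE ->; by rewrite mul0r.
Qed.

Lemma sum2_delta (T : finType) (R : comRingType) (C : T -> T -> R) x :
  \sum_y \sum_z (y == x)%:R * C y z * (z == x)%:R = C x x.
Proof.
under eq_bigr => y _ do under eq_bigr => z _ do rewrite mulrC.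
under eq_bigr => y _ do rewrite sum_delta.
exact: sum_delta.
Qed.

Lemma sub_bigU (I : eqType) (Om : Type) (s : seq I) (F : I -> set Om) x :
  x \in s -> F x `<=` \big[setU/set0]_(i <- s) F i.
Proof.
elim: s => [|y s IH] //; rewrite inE big_cons => /orP[/eqP ->|/IH h].
  exact: subsetUl.
by apply: subset_trans h _; exact: subsetUr.
Qed.

Lemma bigU_le (R : realType) d (Om : measurableType d) (P : probability Om R)
   (I : Type) (s : seq I) (F : I -> set Om) :
  (forall i, measurable (F i)) ->
  (P (\big[setU/set0]_(i <- s) F i) <= \sum_(i <- s) P (F i))%E.
Proof.
move=> mF; elim: s => [|y s IH]; first by rewrite !big_nil measure0.
rewrite !big_cons; apply: le_trans (measureU2 _ _ _) _ => //.
  exact: bigsetU_measurable.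
exact: leeD.
Qed.

Lemma mgt (R : realType) (a : R) : measurable [set y : R | a < y].
Proof.
rewrite (_ : [set y | _ < y] = `]a, +oo[%classic); last first.
  by apply/seteqP; split => y /=; rewrite in_itv /= andbT.
exact: measurable_itv.
Qed.

Lemma mge (R : realType) (a : R) : measurable [set y : R | a <= y].
Proof.
rewrite (_ : [set y | _ <= y] = `[a, +oo[%classic); last first.
  by apply/seteqP; split => y /=; rewrite in_itv /= andbT.
exact: measurable_itv.
Qed.

Lemma p_le1 (R : realType) : p_const R <= 1.
Proof.
rewrite /p_const invf_le1; last first.
  by rewrite !mulr_gt0 ?expR_gt0 ?sqrtr_gt0 ?pi_gt0.
have e1 : 1 <= expR (1 : R) by apply: le_trans (expR_ge1Dx _); lra.
have q1 : 1 <= Num.sqrt (pi : R).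
  rewrite -sqrtr1 ler_sqrt ?pi_gt0 //; apply: le_trans (pi_ge2 R); lra.
nra.
Qed.

Theorem lemma4 (R : realType) (T : finType)
  (k : T -> T -> R) (hk : psd_kernel k)
  (sig : R) (hsig : 0 < sig)
  (t : nat) (ht : (0 < t)%N) (delta : R) (hdelta : 0 < delta < 1)
  (n : nat) (hn : (n < t)%N) (xs : 'I_n -> T) (ys : 'I_n -> R)
  (f : T -> R) (xstar : T) (hxstar : forall x, f x <= f xstar)
  (hE : forall x, `|post_mean k (sig ^+ 2) xs ys x - f x|
                  <= beta_t T t delta * post_sd k (sig ^+ 2) xs x)
  (d : measure_display) (Omega : measurableType d) (P : probability Omega R)
  (ft : Omega -> T -> R)
  (hft : gaussian_vector P ft (post_mean k (sig ^+ 2) xs ys)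
           (fun x y => beta_t T t delta ^+ 2 * post_cov k (sig ^+ 2) xs x y))
  (xt : Omega -> T) (hxt_max : forall w x, ft w x <= ft w (xt w))
  (hxt_meas : forall x, measurable (xt @^-1` [set x])) :
  ((p_const R - (t%:R ^+ 2)^-1)%:E <=
    P [set w | ~ (f xstar - f (xt w) >
                  c_t T t delta * post_sd k (sig ^+ 2) xs (xt w))%R])%E.
Proof.
set mu := post_mean k (sig ^+ 2) xs ys.
set C := post_cov k (sig ^+ 2) xs.
set sd := post_sd k (sig ^+ 2) xs.
set be := beta_t T t delta.
set N : R := #|T|%:R * t%:R ^+ 2.
set sq := Num.sqrt (2 * ln N).
have cE : c_t T t delta = be * (1 + sq) by [].
case: hft => hmeas hlaw.
have T0 : (0 < #|T|)%N by apply/card_gt0P; exists xstar.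
have T1 : 1 <= #|T|%:R :> R by rewrite ler1n.
have t1 : 1 <= t%:R :> R by rewrite ler1n.
have t21 : 1 <= t%:R ^+ 2 :> R by rewrite exprn_ege1.
have N1 : 1 <= N by rewrite /N; nra.
have N0 : 0 < N by lra.
have lnN : 0 <= ln N by rewrite ln_ge0.
have sq0 : 0 <= sq by exact: sqrtr_ge0.
have expsq : expR (- (sq ^+ 2 / 2)) = N^-1.
  rewrite /sq sqr_sqrtr ?mulr_ge0 // mulrC mulrA mulVf ?mul1r; last by [].
  by rewrite expRN lnK // posrE.
have be0 : 0 < be.
  rewrite /be /beta_t mulr_gt0 // ln_gt0 //.
  case/andP: hdelta => d0 d1.
  have pi2 : 4 <= (pi : R) ^+ 2 by have := pi_ge2 R; nra.
  rewrite ltr_pdivlMr ?mulr_gt0 // mul1r.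
  have : 4 <= pi ^+ 2 * t%:R ^+ 2 * #|T|%:R :> R.
    have h1 : 4 <= pi ^+ 2 * t%:R ^+ 2 :> R by nra.
    nra.
  lra.
have coord : forall x A, measurable A ->
    P ((fun w => ft w x) @^-1` A) = gauss_law (mu x) (be ^+ 2 * C x x) A.
  move=> x A mA; have := hlaw (fun y => (y == x)%:R) A mA.
  rewrite sum_delta (@sum2_delta _ _ (fun y z => be ^+ 2 * C y z)) => <-.
  by rewrite (_ : (fun w => \sum_x0 _) = (fun w => ft w x)) //; apply/funext => w; rewrite sum_delta.
have sdE : forall x, 0 < be ^+ 2 * C x x -> Num.sqrt (be ^+ 2 * C x x) = be * sd x.
  move=> x _; rewrite sqrtrM ?sqr_ge0 // sqrtr_sqr ger0_norm //; exact: ltW.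
have sd0 : forall x, ~~ (0 < be ^+ 2 * C x x) -> sd x = 0.
  move=> x; rewrite -leNgt pmulr_rle0 ?exprn_gt0 // => h.
  by apply/eqP; rewrite /sd sqrtr_eq0.
set E0 := (fun w => ft w xstar) @^-1` [set y | mu xstar + be * sd xstar <= y].
set B := fun x => (fun w => ft w x) @^-1` [set y | mu x + sq * (be * sd x) < y].
have mB : forall x, measurable (B x).
  move=> x; have := hmeas x measurableT _ (mgt _ (mu x + sq * (be * sd x))).
  by rewrite setTI.
have mE0 : measurable E0.
  have := hmeas xstar measurableT _ (mge _ (mu xstar + be * sd xstar)).
  by rewrite setTI.
have hE0 : ((p_const R)%:E <= P E0)%E.
  rewrite /E0 coord; last exact: mge.
  rewrite /gauss_law; case: ifPn => hv.
    rewrite sdE //; apply: normal_lower.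
    by rewrite -sdE // sqrtr_gt0.
  rewrite sd0 // mulr0 addr0 diracE mem_set //= lee_fin; exact: p_le1.
have hB : forall x, (P (B x) <= (N^-1)%:E)%E.
  move=> x; rewrite /B coord; last exact: mgt.
  rewrite /gauss_law; case: ifPn => hv.
    rewrite sdE // -expsq; apply: normal_tail => //.
    by rewrite -sdE // sqrtr_gt0.
  rewrite sd0 // mulr0 mulr0 addr0 diracE memNset ?lee_fin ?invr_ge0 ?ltW //=.
  by rewrite ltxx.
set U := \big[setU/set0]_(x <- index_enum T) B x.
have mU : measurable U by exact: bigsetU_measurable.
have hU : (P U <= (t%:R ^+ 2)^-1%:E)%E.
  apply: le_trans (@bigU_le _ _ _ P _ (index_enum T) _ mB) _.
  apply: (@le_trans _ _ (\sum_(i <- index_enum T) (N^-1)%:E)%E); first by apply: lee_sum => x _; exact: hB.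
  rewrite sumEFin lee_fin sumr_const -[_ *+ _]mulr_natl (_ : #|xpredT| = #|T|) // /N invfM mulrA mulfV ?mul1r //.
  by rewrite gt_eqF // ltr0n.
set tg := [set w | ~ (f xstar - f (xt w) > c_t T t delta * sd (xt w))%R].
have mtg : measurable tg.
  have -> : tg = \bigcup_(z in [set z | ~ (f xstar - f z > c_t T t delta * sd z)%R])
                   xt @^-1` [set z].
    apply/seteqP; split => w /=; first by move=> h; exists (xt w).
    move=> [z h hz]; have hz2 : xt w = z := hz; by rewrite /tg /= hz2.
  apply: fin_bigcup_measurable; first exact: finite_finset.
  by move=> z _; exact: hxt_meas.
have sub1 : E0 `\` U `<=` tg.
  move=> w [/= h0 hU'] /= hlt.
  set z := xt w in hlt.
  have hz : ~ B z w by move=> hb; apply: hU'; exact: (@sub_bigU _ _ _ B z (mem_index_enum z) w hb).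
  have hz' : ft w z <= mu z + sq * (be * sd z).
    by rewrite leNgt; apply/negP => hh; apply: hz.
  have h1 := hE z; have h2 := hE xstar.
  move: h1 h2; rewrite !ler_norml => /andP[_ h1] /andP[h2 _].
  have h1' : mu z - f z <= be * sd z := h1.
  have h2' : - (be * sd xstar) <= mu xstar - f xstar := h2.
  have h0' : mu xstar + be * sd xstar <= ft w xstar := h0.
  have hm := hxt_max w xstar.
  rewrite cE in hlt.
  have e1 : be * (1 + sq) * sd z = be * sd z + sq * (be * sd z) by ring.
  rewrite e1 in hlt.
  rewrite -/z in hm.
  lra.
have le1 : (P E0 <= P (E0 `\` U) + P U)%E.
  apply: le_trans (measureU2 _ _ _); last exact: mU.
    apply: le_measure; rewrite ?inE //.
      by apply: measurableU => //; exact: measurableD.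
    by move=> w hw; case: (pselect (U w)) => hu; [right|left].
  exact: measurableD.
have le2 : (P (E0 `\` U) <= P tg)%E.
  by apply: le_measure; rewrite ?inE //; exact: measurableD.
have := le_trans hE0 (le_trans le1 (leeD le2 hU)).
have g0 := measure_ge0 P tg; have g1 := probability_le1 P mtg.
move: g0 g1; rewrite -/tg; case: (P tg) => [r||] //= g0 g1.
by rewrite -EFinD !lee_fin => h; lra.
Qed.
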